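(* Let $P$ be a program and $D$ a conjunction of disequations. Then $D$ succeeds in $P$ iff every ground instance of $D$ holds.
   Context: There are infinite, pairwise disjoint sets of variables, function symbols (with arities) and predicate symbols. Predicate symbols $\mathit{true}$, $=$, $\neq$ are basic, others non-basic. A disequation is an atom $t_1\neq t_2$ with $t_1,t_2$ terms. A goal is a conjunction of atoms ('','' associative, neutral element $\mathit{true}$); a clause is $A\leftarrow G$ with $A$ non-basic; a program is a set of clauses. Operational semantics for program $P$: (1) $(t_1=t_2,G)\longmapsto_P G\vartheta$ if $t_1,t_2$ unify with mgu $\vartheta$; (2) $(t_1\neq t_2,G)\longmapsto_P G$ if $t_1,t_2$ are not unifiable; (3) $(A,G)\longmapsto_P(bd(C),G)\vartheta$ for $A$ non-basic, $C$ a renamed apart clause of $P$, $\vartheta$ an mgu of $A$ and the head of $C$. A goal succeeds in $P$ iff there is a derivation from it to $\mathit{true}$. A ground conjunction of disequations holds iff each of its disequations $t_1\neq t_2$ relates two distinct ground terms (the empty conjunction $\mathit{true}$ holds). *)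

(* Defs.v *)
From Stdlib Require Import List.
Import ListNotations.

(* Function symbols are pairs (name, arity): a term [Fn f args] uses the
   function symbol with name [f] and arity [length args]; hence for every
   arity there are infinitely many function symbols (constants included). *)
Inductive term : Type :=
| Var : nat -> term
| Fn  : nat -> list term -> term.

(* Atoms: the basic predicates [=] and [<>] and non-basic predicate atoms
   [Pred p args] (predicate symbol = (name p, arity length args)).
   The basic atom [true] is the neutral element of conjunction, so it is
   represented by the empty goal and not as a separate atom. *)
Inductive atom : Type :=
| Eq   : term -> term -> atom
| Neq  : term -> term -> atom
| Pred : nat -> list term -> atom.

Definition goal := list atom.

Record clause := Clause { head_pred : nat; head_args : list term; body : goal }.
Definition head (C : clause) : atom := Pred (head_pred C) (head_args C).
Definition bd (C : clause) : goal := body C.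

Definition program := clause -> Prop.

Definition subst := nat -> term.

Fixpoint tsubst (s : subst) (t : term) : term :=
  match t with
  | Var x => s x
  | Fn f l => Fn f (map (tsubst s) l)
  end.

Definition asubst (s : subst) (a : atom) : atom :=
  match a with
  | Eq t u => Eq (tsubst s t) (tsubst s u)
  | Neq t u => Neq (tsubst s t) (tsubst s u)
  | Pred p l => Pred p (map (tsubst s) l)
  end.

Definition gsubst (s : subst) (g : goal) : goal := map (asubst s) g.

Definition csubst (s : subst) (C : clause) : clause :=
  Clause (head_pred C) (map (tsubst s) (head_args C)) (gsubst s (body C)).

Fixpoint occurs (x : nat) (t : term) : Prop :=
  match t with
  | Var y => x = y
  | Fn _ l => (fix go (l : list term) : Prop :=
                 match l with
                 | [] => False
                 | u :: l' => occurs x u \/ go l'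
                 end) l
  end.

Definition aoccurs (x : nat) (a : atom) : Prop :=
  match a with
  | Eq t u | Neq t u => occurs x t \/ occurs x u
  | Pred _ l => exists t, In t l /\ occurs x t
  end.

Definition goccurs (x : nat) (g : goal) : Prop := exists a, In a g /\ aoccurs x a.

Definition coccurs (x : nat) (C : clause) : Prop :=
  aoccurs x (head C) \/ goccurs x (body C).

Definition ground (t : term) : Prop := forall x, ~ occurs x t.

Definition more_general (th tau : subst) : Prop :=
  exists rho : subst, forall x, tsubst rho (th x) = tau x.

Definition unifier_t (th : subst) (t1 t2 : term) : Prop := tsubst th t1 = tsubst th t2.
Definition unifiable (t1 t2 : term) : Prop := exists th, unifier_t th t1 t2.
Definition mgu_t (th : subst) (t1 t2 : term) : Prop :=
  unifier_t th t1 t2 /\ forall tau, unifier_t tau t1 t2 -> more_general th tau.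

Definition unifier_a (th : subst) (a1 a2 : atom) : Prop := asubst th a1 = asubst th a2.
Definition mgu_a (th : subst) (a1 a2 : atom) : Prop :=
  unifier_a th a1 a2 /\ forall tau, unifier_a tau a1 a2 -> more_general th tau.

Definition renaming (r : nat -> nat) : Prop :=
  (forall x y, r x = r y -> x = y) /\ (forall y, exists x, r x = y).

Definition renamed_apart_clause (P : program) (g : goal) (C : clause) : Prop :=
  exists C0 r, P C0 /\ renaming r /\ C = csubst (fun x => Var (r x)) C0 /\
               forall x, coccurs x C -> ~ goccurs x g.

(* One derivation step (the leftmost atom is selected). *)
Inductive step (P : program) : goal -> goal -> Prop :=
| step_eq : forall t1 t2 G th,
    mgu_t th t1 t2 -> step P (Eq t1 t2 :: G) (gsubst th G)
| step_neq : forall t1 t2 G,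
    ~ unifiable t1 t2 -> step P (Neq t1 t2 :: G) G
| step_pred : forall p l G C th,
    renamed_apart_clause P (Pred p l :: G) C ->
    mgu_a th (Pred p l) (head C) ->
    step P (Pred p l :: G) (gsubst th (bd C ++ G)).

Inductive derives (P : program) : goal -> goal -> Prop :=
| derives_refl : forall G, derives P G G
| derives_step : forall G1 G2 G3, step P G1 G2 -> derives P G2 G3 -> derives P G1 G3.

Definition succeeds (P : program) (G : goal) : Prop := derives P G [].

(* Conjunctions of disequations, given as lists of pairs (t1, t2) meaning t1 <> t2. *)
Definition diseqs := list (term * term).

Definition diseq_goal (D : diseqs) : goal := map (fun p => Neq (fst p) (snd p)) D.

Definition dsubst (s : subst) (D : diseqs) : diseqs :=
  map (fun p => (tsubst s (fst p), tsubst s (snd p))) D.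

Definition ground_diseqs (D : diseqs) : Prop :=
  forall p, In p D -> ground (fst p) /\ ground (snd p).

Definition holds (D : diseqs) : Prop :=
  forall p, In p D -> fst p <> snd p.

Definition ground_instance (D' D : diseqs) : Prop :=
  exists s, D' = dsubst s D /\ ground_diseqs D'.

(* Main.v *)
Require Import Defs.
From Stdlib Require Import List.
Import ListNotations.

Section T.
Variable Pt : term -> Prop.
Hypothesis HV : forall x, Pt (Var x).
Hypothesis HF : forall f l, Forall Pt l -> Pt (Fn f l).
Fixpoint term_ind' (t : term) : Pt t :=
  match t with
  | Var x => HV x
  | Fn f l => HF f l ((fix go (l : list term) : Forall Pt l :=
                       match l with
                       | [] => Forall_nil _
                       | u :: l' => Forall_cons u (term_ind' u) (go l')
                       end) l)
  end.
End T.

Lemma tsubst_comp s1 s2 t :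
  tsubst s2 (tsubst s1 t) = tsubst (fun x => tsubst s2 (s1 x)) t.
Proof.
  induction t using term_ind'; simpl; auto.
  f_equal. rewrite map_map. induction H; simpl; auto. f_equal; auto.
Qed.

Lemma occurs_cons x f u l :
  occurs x (Fn f (u :: l)) <-> occurs x u \/ occurs x (Fn f l).
Proof. simpl. reflexivity. Qed.

Lemma occurs_subst x s t :
  (forall y, ~ occurs x (s y)) -> ~ occurs x (tsubst s t).
Proof.
  intros Hs. induction t using term_ind'; simpl tsubst; auto.
  induction H; simpl map.
  - simpl; auto.
  - rewrite occurs_cons. intros [A|A]; auto.
Qed.

Lemma succ_iff P D :
  succeeds P (diseq_goal D) <-> (forall p, In p D -> ~ unifiable (fst p) (snd p)).
Proof.
  unfold succeeds. induction D as [|a D IH]; simpl.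
  - split; [tauto| intros; constructor].
  - split.
    + intros H. inversion H; subst.
      inversion H0; subst.
      intros p [<-|Hp]; auto.
      apply IH; auto.
    + intros H. econstructor.
      * apply step_neq. apply H. auto.
      * apply IH. intros; apply H; auto.
Qed.

Theorem lemma15 (P : program) (D : diseqs) :
  succeeds P (diseq_goal D) <-> (forall D', ground_instance D' D -> holds D').
Proof.
  rewrite succ_iff. split.
  - intros H D' [s [-> Hg]] p Hp E.
    unfold dsubst in Hp. apply in_map_iff in Hp as [q [<- Hq]].
    apply (H q Hq). exists s. exact E.
  - intros H p Hp [th Hth].
    set (s := fun x => tsubst (fun _ => Fn 0 []) (th x)).
    assert (Hgr : forall t, ground (tsubst s t)).
    { intros t x. apply occurs_subst. intros y.
      apply occurs_subst. intros z. simpl. auto. }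
    refine (H (dsubst s D) _ (tsubst s (fst p), tsubst s (snd p)) _ _).
    + exists s. split; auto. intros q Hq. unfold dsubst in Hq.
      apply in_map_iff in Hq as [r [<- _]]. simpl. auto.
    + unfold dsubst. apply in_map_iff. eexists; split; eauto.
    + simpl. unfold s. rewrite <- !tsubst_comp. unfold unifier_t in Hth.
      rewrite Hth. reflexivity.
Qed.
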